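(* Let $f:\mathbb{R}^d\to\mathbb{R}$ be convex and $L$-smooth (i.e., $\|\nabla f(x)-\nabla f(y)\|\le L\|x-y\|$ for all $x,y$), and let $x^\star$ be a minimizer of $f$. Fix an integer $N\ge 1$ and define positive scalars $\theta_N=1$ and, for $k=N-1,\dots,0$, $\theta_k>0$ by $\theta_k^2-\theta_k=\theta_{k+1}^2$; additionally set $\theta_{N+1}=0$. Given $x_0\in\mathbb{R}^d$, let $v_0=\mathbf{0}$ and for $k=0,\dots,N-1$, $$v_{k+1}=v_k+\frac{1}{L\theta_k\theta_{k+1}^2}\nabla f(x_k),\qquad x_{k+1}=x_k-\frac{1}{L}\nabla f(x_k)-(2\theta_{k+1}^3-\theta_{k+1}^2)v_{k+1}.$$ Define, for $k=0,\dots,N$, $A_k=\frac{1}{\theta_k^2}\big(f(x_N)-f(x^\star)-\frac{1}{2L}\|\nabla f(x_N)\|^2\big)$, $B_k=\frac{1}{\theta_k^2}(f(x_k)-f(x^\star))$, $C_k=\frac{1}{2L\theta_k^2}\|\nabla f(x_k)\|^2$, and $E_k=\frac{\theta_{k+1}^2}{\theta_k}\langle\nabla f(x_k),v_k\rangle$. Then for every $k\in\{0,\dots,N-1\}$, $$A_k+B_{k+1}+C_{k+1}+E_{k+1}\le A_{k+1}+B_k+C_k+E_k-\theta_{k+1}\langle\nabla f(x_{k+1}),v_{k+1}\rangle+\sum_{i=k+1}^{N}\frac{\theta_i}{L\theta_k\theta_{k+1}^2}\langle\nabla f(x_k),\nabla f(x_i)\rangle.$$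
   Context: The iteration above is the paper's ''momentum'' reformulation of the optimized gradient method for gradient minimization (OGM-G). $\langle\cdot,\cdot\rangle$ and $\|\cdot\|$ are the Euclidean inner product and norm. *)

(* Defs.v *)
From HB Require Import structures.
From mathcomp Require Import all_boot all_order all_algebra.
From mathcomp Require Import all_classical all_reals topology normedtype derive.
Set Implicit Arguments. Unset Strict Implicit. Unset Printing Implicit Defensive.
Import Order.TTheory GRing.Theory Num.Theory.
Import numFieldNormedType.Exports.
Local Open Scope ring_scope.

(* Euclidean inner product and norm on R^d (the canonical norm on 'rV is the sup norm,
   so the Euclidean one is defined explicitly). *)
Definition dotp {R : realType} {d : nat} (u v : 'rV[R]_d) : R := (u *m v^T) 0 0.
Definition enorm {R : realType} {d : nat} (u : 'rV[R]_d) : R := Num.sqrt (dotp u u).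

Definition is_gradient {R : realType} {d : nat} (f : 'rV[R]_d -> R) (g : 'rV[R]_d -> 'rV[R]_d) :=
  forall x, differentiable f x /\ forall v, 'd f x v = dotp (g x) v.

Definition convex_fun {R : realType} {d : nat} (f : 'rV[R]_d -> R) :=
  forall (x y : 'rV[R]_d) (t : R), 0 <= t <= 1 ->
    f ((1 - t) *: x + t *: y) <= (1 - t) * f x + t * f y.

Definition L_smooth {R : realType} {d : nat} (L : R) (g : 'rV[R]_d -> 'rV[R]_d) :=
  forall x y, enorm (g x - g y) <= L * enorm (x - y).

(* Main.v *)
Set Warnings "-all".
Require Import Defs.
From HB Require Import structures.
From mathcomp Require Import all_boot all_order all_algebra.
From mathcomp Require Import all_classical all_reals topology normedtype derive.
From mathcomp Require Import ring lra zify.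
Import Order.TTheory GRing.Theory Num.Theory.
Import numFieldNormedType.Exports.
Local Open Scope ring_scope.
Set Warnings "-all".
Section Dot.
Context {R : realType} {d : nat}.
Implicit Types u v w : 'rV[R]_d.
Lemma dotpC u v : dotp u v = dotp v u.
Proof. by rewrite /dotp -[u *m v^T]trmxK trmx_mul trmxK mxE. Qed.
Lemma dotpDr u v w : dotp u (v + w) = dotp u v + dotp u w.
Proof. by rewrite /dotp linearD mulmxDr mxE. Qed.
Lemma dotpDl u v w : dotp (v + w) u = dotp v u + dotp w u.
Proof. by rewrite dotpC dotpDr !(dotpC u). Qed.
Lemma dotpZr a u v : dotp u (a *: v) = a * dotp u v.
Proof. by rewrite /dotp linearZ /= -scalemxAr mxE. Qed.
Lemma dotpZl a u v : dotp (a *: v) u = a * dotp v u.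
Proof. by rewrite dotpC dotpZr dotpC. Qed.
Lemma dotpNr u v : dotp u (- v) = - dotp u v.
Proof. by rewrite -scaleN1r dotpZr mulN1r. Qed.
Lemma dotpNl u v : dotp (- v) u = - dotp v u.
Proof. by rewrite dotpC dotpNr dotpC. Qed.
Lemma dotpBr u v w : dotp u (v - w) = dotp u v - dotp u w.
Proof. by rewrite dotpDr dotpNr. Qed.
Lemma dotpBl u v w : dotp (v - w) u = dotp v u - dotp w u.
Proof. by rewrite dotpDl dotpNl. Qed.
Lemma dotp0r u : dotp u 0 = 0.
Proof. by rewrite /dotp linear0 mulmx0 mxE. Qed.
Lemma dotp0l u : dotp 0 u = 0.
Proof. by rewrite dotpC dotp0r. Qed.
Lemma dotp_ge0 u : 0 <= dotp u u.
Proof.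
rewrite /dotp mxE; apply: sumr_ge0 => i _; by rewrite !mxE -expr2 sqr_ge0.
Qed.
Lemma enorm_sq u : enorm u ^+ 2 = dotp u u.
Proof. by rewrite /enorm sqr_sqrtr // dotp_ge0. Qed.
Lemma dotp_sumr (I : Type) (r : seq I) (P : pred I) (F : I -> 'rV[R]_d) u :
  dotp u (\sum_(i <- r | P i) F i) = \sum_(i <- r | P i) dotp u (F i).
Proof.
elim/big_rec2: _ => [|i y1 y2 _ <-]; first exact: dotp0r.
by rewrite dotpDr.
Qed.
End Dot.
Section Anal.
Context {R : realType} {d : nat}.
Variables (f : 'rV[R]_d -> R) (g : 'rV[R]_d -> 'rV[R]_d).
Hypothesis Hg : is_gradient f g.

Lemma line_derive p w t :
  is_derive t (1:R) (fun s => f (p + s *: w)) (dotp (g (p + t *: w)) w).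
Proof.
set q := p + t *: w.
have [df dg] := Hg q.
have der : derivable f q w by exact: diff_derivable.
have E : (fun e : R => e^-1 *: (((fun s => f (p + s *: w)) \o shift t) (e *: 1)
             - (fun s => f (p + s *: w)) t))
       = (fun e : R => e^-1 *: ((f \o shift q) (e *: w) - f q)).
  apply/funext => e /=; rewrite /shift /=; congr (_ *: (f _ - _)).
  rewrite /q [e *: 1]mulr1 scalerDl.
  by rewrite addrCA.
split.
  by rewrite /derivable E.
by rewrite /derive E -/(derive f q w) deriveE // dg.
Qed.
Lemma amgm (a w : 'rV[R]_d) (c : R) : 0 < c ->
  dotp a a <= c ^+ 2 * dotp w w -> dotp a w <= c * dotp w w.
Proof.
move=> c0 H.
have := dotp_ge0 (a - c *: w).
rewrite !(dotpBl, dotpBr, dotpZl, dotpZr) (dotpC w a) => H2.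
have : 2 * c * dotp a w <= 2 * c * (c * dotp w w) by nra.
by rewrite ler_pM2l ?mulr_gt0.
Qed.

Variable L : R.
Hypothesis L0 : 0 < L.
Hypothesis Ls : L_smooth L g.

Lemma descent p w : f (p + w) <= f p + dotp (g p) w + L / 2 * dotp w w.
Proof.
set al := dotp (g p) w; set be := L / 2 * dotp w w.
pose psi := fun s : R => f (p + s *: w) - al * s - be * (s * s).
have dpsi s : is_derive s (1:R) psi (dotp (g (p + s *: w)) w - al - 2 * s * be).
  have h1 := line_derive p w s.
  have h2 := is_deriveZ al (is_derive_id s (1:R)).
  have h3 := is_deriveZ be (is_deriveM (is_derive_id s (1:R)) (is_derive_id s (1:R))).
  have := is_deriveB (is_deriveB h1 h2) h3.
  move=> H; apply: (is_derive_eq H).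
  rewrite /GRing.scale /=; ring.
have key : psi 1 <= psi 0.
  apply: (@ler0_derive1_nincr _ psi 0 1) => //.
  - move=> s; rewrite in_itv /= => /andP [s0 s1].
    have [_ dv] := dpsi s; rewrite derive1E dv.
    set a := g (p + s *: w) - g p.
    have ha : dotp a w <= (L * s) * dotp w w.
      apply: amgm; first exact: mulr_gt0.
      have := Ls (p + s *: w) p.
      rewrite -/a addrAC subrr add0r => h.
      have e0 : 0 <= enorm a by rewrite /enorm sqrtr_ge0.
      have e2 : 0 <= enorm (s *: w) by rewrite /enorm sqrtr_ge0.
      have : enorm a ^+ 2 <= (L * enorm (s *: w)) ^+ 2.
        by rewrite !expr2; apply: ler_pM.
      by rewrite exprMn !enorm_sq dotpZl dotpZr exprMn !expr2 !mulrA.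
    move: ha; rewrite /a dotpBl -/al /be; lra.
  - apply: derivable_within_continuous => s _; by case: (dpsi s) => ? _.
move: key; rewrite /psi !scale1r scale0r addr0 /=; lra.
Qed.
Hypothesis Hc : convex_fun f.

Lemma grad_ineq p w : f p + dotp (g p) w <= f (p + w).
Proof.
have [dh vh] := line_derive p w 0.
rewrite scale0r addr0 in vh.
rewrite -vh -lerBrDl.
apply: (cvgr_to_le (cvg_dnbhs_at_right dh)).
near=> e.
have e0 : 0 < e by near: e; exact: nbhs_right_gt.
have e1 : e <= 1 by near: e; exact: nbhs_right_le.
rewrite /= /shift /= [e *: 1]mulr1 addr0 scale0r addr0.
have := Hc p (p + w) e; rewrite e1 ltW //= => /(_ isT).
have -> : (1 - e) *: p + e *: (p + w) = p + e *: w.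
  by rewrite scalerBl scale1r scalerDr addrA subrK.
move=> H.
rewrite [_ *: _]mulrC ler_pdivrMr //.
lra.
Unshelve. all: by end_near.
Qed.
Lemma cocoer x y :
  f y + dotp (g y) (x - y) + (2 * L)^-1 * dotp (g x - g y) (g x - g y) <= f x.
Proof.
set u := g x - g y.
have H1 := grad_ineq y (x - L^-1 *: u - y).
have H2 := descent x (- (L^-1 *: u)).
rewrite (_ : y + (x - L^-1 *: u - y) = x + - (L^-1 *: u)) in H1; last first.
  by rewrite addrC subrK.
have Hu : dotp (g x) u - dotp (g y) u = dotp u u by rewrite -dotpBl.
rewrite -/u; clearbody u.
set F := f (x + - (L^-1 *: u)) in H1 H2 *.
move: H1 H2; rewrite !(dotpBr, dotpNr, dotpZr, dotpNl, dotpZl).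
set a := dotp (g y) u; set b := dotp (g x) u; set c := dotp u u.
set B := dotp (g y) x - dotp (g y) y.
have Lc : L / 2 * - (L^-1 * - (L^-1 * c)) = (2 * L)^-1 * c.
  by field; rewrite lt0r_neq0.
rewrite Lc /B => H1 H2.
have E : L^-1 * b - L^-1 * a = 2 * ((2 * L)^-1 * c).
  rewrite /a /b /c -Hu; field; by rewrite lt0r_neq0.
lra.
Qed.
End Anal.

Section Alg.
Context {R : realType} {d : nat}.
Variables (g : 'rV[R]_d -> 'rV[R]_d) (L : R) (N : nat) (theta : nat -> R)
  (x v : nat -> 'rV[R]_d).
Hypothesis L0 : L != 0.
Hypothesis tN : theta N = 1.
Hypothesis Ht : forall k, (k < N)%N -> 0 < theta k /\ theta k ^+ 2 - theta k = theta k.+1 ^+ 2.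
Hypothesis tN1 : theta N.+1 = 0.
Hypothesis Hv : forall k, (k < N)%N ->
     v k.+1 = v k + (L * theta k * theta k.+1 ^+ 2)^-1 *: g (x k).
Hypothesis Hx : forall k, (k < N)%N ->
     x k.+1 = x k - L^-1 *: g (x k)
                  - (2 * theta k.+1 ^+ 3 - theta k.+1 ^+ 2) *: v k.+1.

Lemma theta_facts j : (j < N)%N ->
  [/\ 0 < theta j, theta j ^+ 2 - theta j = theta j.+1 ^+ 2, theta j.+1 != 0
    & theta j.+1 ^+ 2 - theta j.+1 = theta j.+2 ^+ 2].
Proof.
move=> jN; have [T0 hT] := Ht _ jN.
have [jN'|jN'] := ltnP j.+1 N.
  have [s0 hs] := Ht _ jN'.
  by split => //; rewrite gt_eqF.
have e : j.+1 = N by apply/eqP; rewrite eqn_leq jN.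
rewrite e tN tN1 in hT *; split => //; rewrite ?oner_eq0 //.
by rewrite expr1n subrr expr2 mulr0.
Qed.

Lemma invariant j : (j <= N)%N ->
  x j - x N = L^-1 *: (\sum_(j <= i < N) theta i *: g (x i)) + theta j.+1 ^+ 4 *: v j.
Proof.
move=> jN; rewrite -(subKn jN); move: (leq_subr j N).
elim: (N - j)%N => [|n IH] nN.
  by rewrite subn0 subrr big_geq // scaler0 tN1 expr0n scale0r addr0.
have jN' : (N - n.+1 < N)%N by lia.
have [T0 hT s0 hs] := theta_facts _ jN'.
have e1 : (N - n.+1).+1 = (N - n)%N by lia.
have IH' := IH (ltnW nN).
rewrite -e1 in IH'.
set j' := (N - n.+1)%N in jN' T0 hT s0 hs e1 IH' *.
rewrite (big_ltn jN').
set S := \sum_(j'.+1 <= i < N) _ in IH' *.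
have HX := Hx _ jN'; have HV := Hv _ jN'.
have -> : x j' - x N = (x j' - x j'.+1) + (x j'.+1 - x N) by rewrite addrA subrK.
rewrite IH' HX HV.
set T := theta j' in T0 hT HV *; set s := theta j'.+1 in hT s0 hs HV *.
set r := theta j'.+2 in hs *.
have cv : 2 * s ^+ 3 - s ^+ 2 + r ^+ 4 = s ^+ 4.
  have -> : r ^+ 4 = (r ^+ 2) ^+ 2 by rewrite -exprM.
  by rewrite -hs; ring.
have cg : L^-1 + s ^+ 4 * (L * T * s ^+ 2)^-1 = L^-1 * T.
  rewrite (_ : s ^+ 4 * (L * T * s ^+ 2)^-1 = s ^+ 2 / (L * T)); last first.
    by field; rewrite s0 L0 gt_eqF.
  rewrite -hT; field; by rewrite L0 gt_eqF.
apply/rowP => i; rewrite !mxE.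
set G := g (x j') 0 i; set V := v j' 0 i; set S' := S 0 i.
rewrite (_ : (2 * s ^+ 3 - s ^+ 2) = s ^+ 4 - r ^+ 4); last by rewrite -cv; ring.
have cg' : L^-1 * (T * G + S') = (L^-1 + s ^+ 4 * (L * T * s ^+ 2)^-1) * G + L^-1 * S' by rewrite cg; ring.
rewrite cg'.
ring.
Qed.
End Alg.
Lemma final_alg {R : realFieldType} {L T s r fk fk1 fN fs a00 a11 aNN a10 a1V a0S a0N a0V : R} :
  0 < L -> 0 < T -> s != 0 -> T ^+ 2 - T = s ^+ 2 -> s ^+ 2 - s = r ^+ 2 ->
  fk1 + (L^-1 * a10 + (2 * s ^+ 3 - s ^+ 2) * (a1V + (L * T * s ^+ 2)^-1 * a10))
    + (2 * L)^-1 * (a00 - a10 + (- a10 - - a11)) <= fk ->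
  fk - (L^-1 * (T * a00 + a0S) + s ^+ 4 * a0V)
    + (2 * L)^-1 * (aNN - a0N + (- a0N - - a00)) <= fN ->
  T ^- 2 * (fN - fs - (2 * L)^-1 * aNN) + s ^- 2 * (fk1 - fs)
   + (2 * L * s ^+ 2)^-1 * a11 + r ^+ 2 / s * (a1V + (L * T * s ^+ 2)^-1 * a10)
  <= s ^- 2 * (fN - fs - (2 * L)^-1 * aNN) + T ^- 2 * (fk - fs)
   + (2 * L * T ^+ 2)^-1 * a00 + s ^+ 2 / T * a0V
   - s * (a1V + (L * T * s ^+ 2)^-1 * a10)
   + (L * T * s ^+ 2)^-1 * (a0S + a0N).
Proof.
move=> L0 T0 s0 hT hs H1 H2.
have T0' : T != 0 by rewrite gt_eqF.
have L0' : L != 0 by rewrite gt_eqF.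
have hT2 : T ^- 2 = s ^- 2 - (T * s ^+ 2)^-1.
  rewrite -hT; field.
  apply/andP; split => //.
  by rewrite hT expf_neq0.
have hC : (2 * L * T ^+ 2)^-1 = (2 * L)^-1 * T ^- 2.
  by rewrite invfM.
rewrite -subr_ge0.
match goal with |- is_true (0 <= ?b - ?a) =>
 match type of H1 with is_true (?l1 <= _) =>
 match type of H2 with is_true (?l2 <= _) =>
  have E : b - a = s ^- 2 * (fk - l1) + (T * s ^+ 2)^-1 * (fN - l2)
 end end end.
  rewrite hC hT2 -hs.
  field.
  by rewrite T0' s0 L0'.
rewrite E; apply: addr_ge0; apply: mulr_ge0; rewrite ?subr_ge0 //.
  by rewrite invr_ge0 exprn_even_ge0.
by rewrite invr_ge0 mulr_ge0 ?exprn_even_ge0 // ltW.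
Qed.

Theorem proposition1 (R : realType) (d : nat) (f : 'rV[R]_d -> R)
  (g : 'rV[R]_d -> 'rV[R]_d) (L : R) (xstar : 'rV[R]_d) (N : nat)
  (theta : nat -> R) (x v : nat -> 'rV[R]_d) :
  0 < L ->
  is_gradient f g ->
  convex_fun f ->
  L_smooth L g ->
  (forall y, f xstar <= f y) ->
  (1 <= N)%N ->
  theta N = 1 ->
  (forall k, (k < N)%N -> 0 < theta k /\ theta k ^+ 2 - theta k = theta k.+1 ^+ 2) ->
  theta N.+1 = 0 ->
  v 0%N = 0 ->
  (forall k, (k < N)%N ->
     v k.+1 = v k + (L * theta k * theta k.+1 ^+ 2)^-1 *: g (x k)) ->
  (forall k, (k < N)%N ->
     x k.+1 = x k - L^-1 *: g (x k)
                  - (2 * theta k.+1 ^+ 3 - theta k.+1 ^+ 2) *: v k.+1) ->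
  let A k := (theta k ^+ 2)^-1 *
               (f (x N) - f xstar - (2 * L)^-1 * enorm (g (x N)) ^+ 2) in
  let B k := (theta k ^+ 2)^-1 * (f (x k) - f xstar) in
  let C k := (2 * L * theta k ^+ 2)^-1 * enorm (g (x k)) ^+ 2 in
  let E k := theta k.+1 ^+ 2 / theta k * dotp (g (x k)) (v k) in
  forall k, (k < N)%N ->
    A k + B k.+1 + C k.+1 + E k.+1 <=
    A k.+1 + B k + C k + E k - theta k.+1 * dotp (g (x k.+1)) (v k.+1)
    + \sum_(k.+1 <= i < N.+1)
        theta i / (L * theta k * theta k.+1 ^+ 2) * dotp (g (x k)) (g (x i)).
Proof.
move=> L0 Hg Hc Hs Hmin N1 tN Ht tN1 v0 Hv Hx A B C E k kN.
have L0' : L != 0 by rewrite gt_eqF.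
have [T0 hT s0 hs] := @theta_facts R N theta tN Ht tN1 k kN.
have Hinv := @invariant R d g L N theta x v L0' tN Ht tN1 Hv Hx k (ltnW kN).
rewrite (big_ltn kN) in Hinv.
set S := \sum_(k.+1 <= i < N) _ in Hinv.
have Hsum : \sum_(k.+1 <= i < N.+1)
        theta i / (L * theta k * theta k.+1 ^+ 2) * dotp (g (x k)) (g (x i))
   = (L * theta k * theta k.+1 ^+ 2)^-1 * (dotp (g (x k)) S + dotp (g (x k)) (g (x N))).
  rewrite big_nat_recr //= tN mul1r mulrDr; congr (_ + _).
  rewrite /S dotp_sumr mulr_sumr; apply: eq_bigr => i _.
  by rewrite dotpZr; ring.
rewrite Hsum.
have H1 := @cocoer R d f g Hg L L0 Hs Hc (x k) (x k.+1).
have H2 := @cocoer R d f g Hg L L0 Hs Hc (x N) (x k).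
have D1 : x k - x k.+1 = L^-1 *: g (x k)
    + (2 * theta k.+1 ^+ 3 - theta k.+1 ^+ 2) *: v k.+1.
  by rewrite (Hx _ kN); apply/rowP => i; rewrite !mxE; ring.
rewrite D1 in H1.
rewrite (_ : x N - x k = - (x k - x N)) in H2; last by rewrite opprB.
rewrite Hinv in H2.
rewrite /A /B /C /E !enorm_sq.
rewrite (Hv _ kN) in H1 *.
move: H1 H2.
rewrite !(dotpDl, dotpDr, dotpBl, dotpBr, dotpNl, dotpNr, dotpZl, dotpZr).
rewrite (dotpC (g (x k)) (g (x k.+1))) (dotpC (g (x N)) (g (x k))).
exact: (final_alg L0 T0 s0 hT hs).
Qed.
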